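(* Let $\Gamma$ be a finite simplicial graph satisfying (B1): for all non-adjacent $u,v\in V(\Gamma)$, $u\sim v$. Then for any $v\in V(\Gamma)$ with $\mathrm{st}(v)\ne\Gamma$, the graph $\Gamma-\mathrm{st}(v)$ is totally disconnected. In particular, there is a partial conjugation in $\mathrm{Aut}(A_\Gamma)$ of the form $c_{v,\{u\}}$ with $u\notin\mathrm{st}(v)$.
   Context: For $v\in V(\Gamma)$, $\mathrm{lk}(v)$ is the set of vertices adjacent to $v$ and $\mathrm{st}(v)=\mathrm{lk}(v)\cup\{v\}$ (also viewed as full subgraphs); $v\le w$ iff $\mathrm{lk}(v)\subset\mathrm{st}(w)$; $v\sim w$ iff $v\le w$ and $w\le v$. $A_\Gamma=\langle V(\Gamma)\mid [u,v]=1 \text{ whenever } u,v \text{ adjacent}\rangle$. For $v\in V(\Gamma)$ and a connected component $Y$ of $\Gamma-\mathrm{st}(v)$, the partial conjugation $c_{v,Y}$ maps $x\mapsto v^{-1}xv$ for $x\in Y$ and fixes the other vertices. *)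

(* Defs.v *)
From mathcomp Require Import all_boot.
Set Implicit Arguments. Unset Strict Implicit. Unset Printing Implicit Defensive.

Definition simplicial_graph (T : finType) (e : rel T) : Prop :=
  symmetric e /\ irreflexive e.

Section Graph.
Variables (T : finType) (e : rel T).

Definition lk (v : T) : {set T} := [set w | e v w].
Definition st (v : T) : {set T} := v |: lk v.

Definition vle (v w : T) : bool := lk v \subset st w.
Definition vsim (v w : T) : bool := vle v w && vle w v.

Definition induced (S : {set T}) : rel T :=
  [rel x y | [&& x \in S, y \in S & e x y]].

Definition component (S : {set T}) (x : T) : {set T} :=
  [set y | connect (induced S) x y].

Definition totally_disconnected (S : {set T}) : Prop :=
  forall x, x \in S -> component S x = [set x].

Definition minus_st (v : T) : {set T} := ~: st v.
End Graph.

(* Main.v *)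
Require Import Defs.
From mathcomp Require Import all_boot.

Theorem lemma3p5 (T : finType) (e : rel T) :
  simplicial_graph e ->
  (* (B1): all non-adjacent distinct u, w satisfy u ~ w *)
  (forall u w : T, u != w -> ~~ e u w -> vsim e u w) ->
  forall v : T, st e v != [set: T] ->
    totally_disconnected e (minus_st e v) /\
    (* a partial conjugation c_{v,{u}}: {u} is a connected component of Γ - st(v) *)
    exists u : T, u \notin st e v /\ component e (minus_st e v) u = [set u].
Proof.
move=> [esym eirr] B1 v hv.
have noedge : forall x z, ~~ induced e (minus_st e v) x z.
  move=> x z; apply/negP => /and3P [hx hz hxz].
  move: hx hz; rewrite /minus_st /st /lk !inE negb_or => /andP [xv exv] hz.
  have hne : ~~ e x v by rewrite esym.
  have /andP [hle _] := B1 x v xv hne.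
  move: hle => /subsetP /(_ z); rewrite /st /lk !inE hxz => /(_ isT) hzv.
  by rewrite hzv in hz.
have td : totally_disconnected e (minus_st e v).
  move=> x hx; apply/setP => y; rewrite /component !inE.
  apply/idP/idP.
    case/connectP => [[|z p]] /=; first by move=> _ ->.
    by case/andP => h; rewrite (negbTE (noedge x z)) in h.
  by move/eqP ->; exact: connect0.
split => //.
have [u hu] : exists u, u \notin st e v.
  case: (pickP (fun u => u \notin st e v)) => [u hu|h]; first by exists u.
  have hst : st e v = [set: T].
    apply/setP => w; rewrite in_setT; have := h w; rewrite /=; case: (w \in st e v) => //.
  by rewrite hst eqxx in hv.
exists u; split => //; apply: td; by rewrite /minus_st inE.
Qed.
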